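(* Let $n,g$ be integers with $1\leq g\leq \lfloor \frac{n-3}{2}\rfloor$, and let $T$ be a tree of order $n$ of type $T_n^*$ (with respect to $g$). Then $T$ has an $R_g$-cutset and $$\kappa_g(T)=n-2g-2.$$
   Context: All graphs are finite and simple. A tree $T$ of order $n$ is of type $T_n^*$ (with respect to $g$) if it contains a vertex $v$ such that $T-v$ has two connected components with exactly $g+1$ vertices each, and every other connected component of $T-v$ (there may be none) has at most $g$ vertices. Equivalently, $T$ is obtained from two trees $T',T''$ of order $g+1$ and trees $T_1,\ldots,T_r$ ($r\ge 0$) each of order at most $g$ with $\sum_i|V(T_i)|=n-2g-3$, by adding a new vertex $v$ and one edge from $v$ to each of $T',T'',T_1,\ldots,T_r$. A set $S\subseteq V(G)$ is a cutset if $G-S$ is disconnected. For a non-negative integer $g$, a cutset $S$ is an $R_g$-cutset if every connected component of $G-S$ has at least $g+1$ vertices. If $G$ has at least one $R_g$-cutset, the $g$-extra connectivity $\kappa_g(G)$ is the minimum cardinality of an $R_g$-cutset of $G$. *)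

(* Defs.v *)
From mathcomp Require Import all_boot.
Set Implicit Arguments. Unset Strict Implicit. Unset Printing Implicit Defensive.

Section Graphs.
Variable T : finType.

Definition simple_graph (e : rel T) : Prop := symmetric e /\ irreflexive e.

Definition del_rel (e : rel T) (S : {set T}) : rel T :=
  [rel x y | [&& x \notin S, y \notin S & e x y]].

(* vertex set of the connected component of G - S containing x (x \notin S) *)
Definition comp (e : rel T) (S : {set T}) (x : T) : {set T} :=
  [set y | connect (del_rel e S) x y].

Definition is_tree (e : rel T) : Prop :=
  (forall x y, connect e x y) /\
  ~ (exists c : seq T, [/\ uniq c, 2 < size c & cycle e c]).

Definition cutset (e : rel T) (S : {set T}) : bool :=
  [exists x, exists y, [&& x \notin S, y \notin S & ~~ connect (del_rel e S) x y]].

Definition Rg_cutset (g : nat) (e : rel T) (S : {set T}) : bool :=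
  cutset e S && [forall x, (x \notin S) ==> (g < #|comp e S x|)].

(* g-extra connectivity: minimum size of an R_g-cutset (meaningful when one exists) *)
Definition kappa (g : nat) (e : rel T) : nat :=
  \big[minn/#|T|]_(S : {set T} | Rg_cutset g e S) #|S|.

Definition type_Tstar (g : nat) (e : rel T) : Prop :=
  exists v a b : T,
    [/\ a != v, b != v, ~~ connect (del_rel e [set v]) a b,
        #|comp e [set v] a| = g.+1 /\ #|comp e [set v] b| = g.+1 &
        forall x, x != v -> x \notin comp e [set v] a -> x \notin comp e [set v] b ->
          #|comp e [set v] x| <= g].

End Graphs.

(* Main.v *)
Require Import Defs.
From mathcomp Require Import all_boot.
From mathcomp Require Import zify.
Set Implicit Arguments. Unset Strict Implicit. Unset Printing Implicit Defensive.

Section Helpers.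
Variable T : finType.

Lemma del_sym (e : rel T) (S : {set T}) : symmetric e -> symmetric (del_rel e S).
Proof. by move=> se x y; rewrite /del_rel /= se andbCA. Qed.

Lemma notin_conn (e : rel T) (S : {set T}) x y :
  x \notin S -> connect (del_rel e S) x y -> y \notin S.
Proof.
move=> xS /connectP [p]; elim: p x xS => [|z p IH] x xS /=; first by move=> _ ->.
by move=> /andP [/and3P [_ zS _] pth]; apply: IH zS pth.
Qed.

Lemma conn_restrict (e : rel T) (S S' : {set T}) x y :
  (forall z, connect (del_rel e S) x z -> z \notin S') ->
  connect (del_rel e S) x y -> connect (del_rel e S') x y.
Proof.
move=> H /connectP [p]; elim/last_ind: p y => [|p z IH] y /=; first by move=> _ ->.
rewrite rcons_path last_rcons => /andP [pth ed] ->.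
apply: connect_trans (IH _ pth erefl) _.
apply: connect1.
have h1 : connect (del_rel e S) x (last x p) by apply/connectP; exists p.
have h2 : connect (del_rel e S) x z.
  by apply/connectP; exists (rcons p z) => //; rewrite ?rcons_path ?pth ?ed ?last_rcons.
move: ed; rewrite /del_rel /= => /and3P [_ _ ->].
by rewrite (H _ h1) (H _ h2).
Qed.

Lemma exit_edge (e : rel T) (K : {set T}) x y :
  connect e x y -> x \in K -> y \notin K ->
  exists u w, [/\ u \in K, w \notin K & e u w].
Proof.
move=> /connectP [p]; elim: p x => [|z p IH] x /=.
  by move=> _ -> xK; rewrite xK.
case/andP => exz pth ey xK yK.
case: (boolP (z \in K)) => zK; first exact: IH z pth ey zK yK.
by exists x, z.
Qed.

Lemma comp_closed (e : rel T) (S : {set T}) x u w :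
  x \notin S -> u \in Defs.comp e S x -> w \notin S -> e u w -> w \in Defs.comp e S x.
Proof.
rewrite !inE => xS xu wS euw; refine (connect_trans xu (connect1 _)).
by rewrite /del_rel /= (notin_conn xS xu) wS euw.
Qed.

End Helpers.

Lemma bigmin_le (I : finType) (P : pred I) (F : I -> nat) x j :
  P j -> \big[minn/x]_(i | P i) F i <= F j.
Proof.
move=> Pj; have : j \in index_enum I by rewrite mem_index_enum.
change (j \in index_enum I -> \big[minn/x]_(i <- index_enum I | P i) F i <= F j).
elim: (index_enum I) => // i s IH; rewrite inE big_cons => /orP [/eqP <-|js].
  by rewrite Pj geq_minl.
case: (P i); last exact: IH.
by rewrite geq_min IH ?orbT.
Qed.


Theorem lemma4p1 (T : finType) (e : rel T) (n g : nat) :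
  simple_graph e -> #|T| = n -> 1 <= g -> g <= (n - 3)./2 ->
  is_tree e -> type_Tstar g e ->
  (exists S : {set T}, Rg_cutset g e S) /\ kappa g e = n - 2 * g - 2.
Proof.
move=> [se ir] Tn g1 gle [conn _] [v [a [b [av bv nab [cA cB] oth]]]].
have symD : forall S, connect_sym (del_rel e S) :=
  fun S => sym_connect_sym (del_sym S se).
have aSv : a \notin [set v] by rewrite inE.
have bSv : b \notin [set v] by rewrite inE.
have compE : forall c x, x \in Defs.comp e [set v] c -> Defs.comp e [set v] x = Defs.comp e [set v] c.
  move=> c x; rewrite inE => cx; apply/setP => y; rewrite !inE.
  apply/idP/idP => [xy|cy]; first exact: connect_trans cx xy.
  by rewrite symD in cx; exact: connect_trans cx cy.
have vA : v \notin Defs.comp e [set v] a.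
  by rewrite inE; apply/negP => /(notin_conn aSv); rewrite inE eqxx.
have vB : v \notin Defs.comp e [set v] b.
  by rewrite inE; apply/negP => /(notin_conn bSv); rewrite inE eqxx.
have big : forall x, x != v -> g < #|Defs.comp e [set v] x| ->
    x \in Defs.comp e [set v] a :|: Defs.comp e [set v] b.
  move=> x xv Rg; apply/negPn/negP; rewrite in_setU => /norP [xA xB].
  have := oth x xv xA xB => h.
  by have := leq_trans Rg h; rewrite ltnn.
have key : forall (S : {set T}) x, v \in S -> x \notin S -> g < #|Defs.comp e S x| ->
    x \in Defs.comp e [set v] a :|: Defs.comp e [set v] b.
  move=> S x vS xS Rg.
  have sub : Defs.comp e S x \subset Defs.comp e [set v] x.
    apply/subsetP=> y; rewrite !inE => xy; apply: conn_restrict xy => z xz.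
    rewrite inE; apply/eqP => zv; move: (notin_conn xS xz); by rewrite zv vS.
  have xv : x != v by apply/eqP => xv; move: xS; rewrite xv vS.
  exact: big xv (leq_trans Rg (subset_leq_card sub)).
have vS_all : forall S, Rg_cutset g e S -> v \in S.
  move=> S /andP [/existsP [x0 /existsP [y0 /and3P [x0S y0S nc]]] /forallP Rg].
  apply/negPn/negP => vS.
  have toV : forall x, x \notin S -> v \in Defs.comp e S x.
    move=> x xS; have Rx := implyP (Rg x) xS.
    apply/negPn/negP => vK.
    have xK : x \in Defs.comp e S x by rewrite inE connect0.
    have xv : x != v by apply/eqP => xv; move: vK; rewrite -xv xK.
    have xSv : x \notin [set v] by rewrite inE.
    have sub : Defs.comp e S x \subset Defs.comp e [set v] x.
      apply/subsetP=> y; rewrite inE => xy; rewrite inE.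
      apply: conn_restrict xy => z xz; rewrite inE.
      apply: (contraNneq _ vK) => zv; by rewrite -zv inE.
    have xAB := big x xv (leq_trans Rx (subset_leq_card sub)).
    have [c [cK cc]] : exists c, Defs.comp e [set v] x = Defs.comp e [set v] c /\
                                 #|Defs.comp e [set v] c| = g.+1.
      case/setUP: xAB => xc; [exists a | exists b]; by rewrite (compE _ _ xc).
    have KE : Defs.comp e S x = Defs.comp e [set v] x.
      by apply/eqP; rewrite eqEcard sub /= cK cc.
    have xK' : x \in Defs.comp e [set v] x by rewrite inE connect0.
    have vK' : v \notin Defs.comp e [set v] x.
      by rewrite inE; apply/negP => /(notin_conn xSv); rewrite inE eqxx.
    have [u [w [uK wK euw]]] := exit_edge (conn x v) xK' vK'.
    case: (eqVneq w v) => [wv | wv].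
      rewrite wv -KE in uK euw.
      by move/negP: vK; apply; exact: comp_closed xS uK vS euw.
    by move: wK; rewrite (comp_closed xSv uK _ euw) // inE.
  have hx := toV x0 x0S; have hy := toV y0 y0S.
  rewrite !inE in hx hy; rewrite symD in hy.
  by move/negP: nc; apply; exact: connect_trans hx hy.
pose A := Defs.comp e [set v] a; pose B := Defs.comp e [set v] b.
pose S0 := ~: (A :|: B).
have vS0 : v \in S0 by rewrite in_setC in_setU negb_or vA vB.
have disj : A :&: B = set0.
  apply/setP => y; rewrite in_set0; apply/negP => /setIP []; rewrite !inE => ay byy.
  by move/negP: nab; apply; rewrite symD in byy; exact: connect_trans ay byy.
have cardAB : #|A :|: B| = g.+1 + g.+1 by rewrite cardsU disj cards0 cA cB subn0.
have cardS0 : #|S0| + (g.+1 + g.+1) = n by rewrite -cardAB addnC cardsC.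
have sub0 : forall c x, Defs.comp e [set v] c \subset A :|: B ->
    #|Defs.comp e [set v] c| = g.+1 -> x \in Defs.comp e [set v] c -> g < #|Defs.comp e S0 x|.
  move=> c x csub cc xc.
  suff : Defs.comp e [set v] c \subset Defs.comp e S0 x by move/subset_leq_card; rewrite cc.
  apply/subsetP => y yc.
  have xy : connect (del_rel e [set v]) x y by move: yc; rewrite -(compE _ _ xc) inE.
  rewrite inE; apply: conn_restrict xy => z xz.
  have zc : z \in Defs.comp e [set v] c by rewrite -(compE _ _ xc) inE.
  by rewrite in_setC negbK (subsetP csub _ zc).
have RS0 : Rg_cutset g e S0.
  apply/andP; split.
    apply/existsP; exists a; apply/existsP; exists b; apply/and3P; split.
    - by rewrite in_setC negbK in_setU inE connect0.
    - by rewrite in_setC negbK in_setU orbC inE connect0.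
    apply: contra nab; apply: connect_sub => x y /= /and3P [xS yS exy].
    apply: connect1; rewrite /del_rel /= exy andbT !inE.
    apply/andP; split; apply/eqP => h; [move: xS | move: yS]; by rewrite h vS0.
  apply/forallP => x; apply/implyP; rewrite in_setC negbK => /setUP [] xc.
    exact: sub0 (subsetUl _ _) cA xc.
  exact: sub0 (subsetUr _ _) cB xc.
have kE : kappa g e = #|S0|.
  apply/eqP; rewrite eqn_leq; apply/andP; split.
    by rewrite /kappa; apply: bigmin_le.
  apply: (big_ind (fun k => #|S0| <= k)).
  - exact: max_card.
  - by move=> x y hx hy; rewrite leq_min hx hy.
  move=> S RS; have vS := vS_all S RS.
  have hsub : ~: S \subset A :|: B.
    apply/subsetP => x; rewrite in_setC => xS.
    move: RS => /andP [_ /forallP Rg].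
    exact: key vS xS (implyP (Rg x) xS).
  have := subset_leq_card hsub; have := cardsC S.
  rewrite cardAB Tn => h1 h2; lia.
split; first by exists S0.
rewrite kE; lia.
Qed.
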